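(* For every even $N\ge 2$, the matrix-valued function $F_{2,N}(z)$ (and hence $F_{1,N}(z)=I-F_{2,N}(z)$) has no pole at $z=1$, i.e. it extends analytically to $z=1$.
   Context: Fix $0<\alpha,\beta<1$. For $\varepsilon\in(0,1)$: $\phi_{\varepsilon,1}(z)=\begin{pmatrix}1&\varepsilon^2z^{-1}\\ \varepsilon^{-2}&1\end{pmatrix}$, $\phi_{\varepsilon,2}(z)=\frac{1}{1-z^{-1}}\phi_{\varepsilon,1}(z)$, $\phi_3(z)=\begin{pmatrix}1&z^{-1}\\1&1\end{pmatrix}$, $\phi_4(z)=\frac{1}{1-z^{-1}}\phi_3(z)$, $\Phi_\varepsilon=\phi_{\varepsilon,1}\phi_{\varepsilon,2}\phi_3\phi_4$. Let $\phi_N(z)=\Phi_\alpha(z)^{N/2}\Phi_\beta(z)^{N/2}$, $t_N=\operatorname{tr}\phi_N$; in a punctured neighborhood of $1$ the eigenvalues are $r_{1,N}=\frac12(t_N+\sqrt{t_N^2-4})$, $r_{2,N}=\frac12(t_N-\sqrt{t_N^2-4})$ with $\sqrt{t^2-4}=t(1-4/t^2)^{1/2}$ (principal branch), and $F_{1,N}(z),F_{2,N}(z)$ are the corresponding spectral projections ($\phi_N=r_{1,N}F_{1,N}+r_{2,N}F_{2,N}$, $F_{1,N}+F_{2,N}=I$, $F_{k,N}^2=F_{k,N}$, $F_{1,N}F_{2,N}=0$). *)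

(* Defs.v *)
From mathcomp Require Import all_boot all_algebra.
From mathcomp.real_closed Require Import complex.
From mathcomp Require Import all_classical all_reals topology normedtype derive.
Import GRing.Theory Num.Theory numFieldNormedType.Exports.

Set Implicit Arguments.
Unset Strict Implicit.
Unset Printing Implicit Defensive.

Local Open Scope ring_scope.

(* The complex numbers over a real field R, viewed as a numClosedFieldType, so
   that MathComp-Analysis equips it with its normed (C-)module structure over
   itself: [derivable f z 1] for [f : CC R -> CC R] is complex differentiability. *)
Definition CC (R : realType) : numClosedFieldType := R[i].

Section Defs.
Variable R : realType.
Local Notation C := (CC R).

Definition mx2 (a b c d : C) : 'M[C]_2 :=
  \matrix_(i < 2, j < 2)
    if (i : nat) == 0%N then (if (j : nat) == 0%N then a else b)
    else (if (j : nat) == 0%N then c else d).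

Definition phi1 (e : R) (z : C) : 'M[C]_2 :=
  mx2 1 ((real_complex R e : C) ^+ 2 * z^-1) ((real_complex R e : C) ^- 2) 1.
Definition phi2 (e : R) (z : C) : 'M[C]_2 := (1 - z^-1)^-1 *: phi1 e z.
Definition phi3 (z : C) : 'M[C]_2 := mx2 1 z^-1 1 1.
Definition phi4 (z : C) : 'M[C]_2 := (1 - z^-1)^-1 *: phi3 z.
Definition Phi (e : R) (z : C) : 'M[C]_2 :=
  phi1 e z *m phi2 e z *m phi3 z *m phi4 z.

Definition phiN (a b : R) (N : nat) (z : C) : 'M[C]_2 :=
  (Phi a z) ^+ N./2 *m (Phi b z) ^+ N./2.

Definition tN (a b : R) (N : nat) (z : C) : C := \tr (phiN a b N z).

(* sqrt(t^2 - 4) := t (1 - 4/t^2)^(1/2), principal branch.  [sqrtc] is the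
   principal square root: nonnegative real part, and nonnegative imaginary
   part when the real part is 0. *)
Definition sqrt_t2m4 (t : C) : C := t * @sqrtc R (1 - 4 / t ^+ 2).

Definition r1N (a b : R) (N : nat) (z : C) : C :=
  (tN a b N z + sqrt_t2m4 (tN a b N z)) / 2.
Definition r2N (a b : R) (N : nat) (z : C) : C :=
  (tN a b N z - sqrt_t2m4 (tN a b N z)) / 2.

(* Spectral projections of phi_N onto the eigenvalues r_{1,N}, r_{2,N}
   (for distinct eigenvalues, the unique F1, F2 with phi = r1 F1 + r2 F2,
   F1 + F2 = I):  F1 = (phi - r2 I)/(r1 - r2),  F2 = (phi - r1 I)/(r2 - r1). *)
Definition F1N (a b : R) (N : nat) (z : C) : 'M[C]_2 :=
  (r1N a b N z - r2N a b N z)^-1 *: (phiN a b N z - (r2N a b N z)%:M).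
Definition F2N (a b : R) (N : nat) (z : C) : 'M[C]_2 :=
  (r2N a b N z - r1N a b N z)^-1 *: (phiN a b N z - (r1N a b N z)%:M).

Definition extends_analytically_at (f : C -> 'M[C]_2) (z0 : C) : Prop :=
  exists g : C -> 'M[C]_2,
    (\forall z \near (z0 ^')%classic, f z = g z) /\
    (\forall z \near z0, forall i j : 'I_2, derivable (fun w => g w i j) z 1).

End Defs.

(* Main.v *)
Require Import Defs.
From mathcomp Require Import all_boot all_algebra.
From mathcomp.real_closed Require Import complex.
From mathcomp Require Import all_classical all_reals topology normedtype derive.
Import GRing.Theory Num.Theory numFieldNormedType.Exports.
Local Open Scope ring_scope.
From mathcomp Require Import all_order ring.
Import Order.TTheory.
Local Open Scope classical_set_scope.
Local Open Scope ring_scope.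

Module A.
Section S.
Variable R : realType.
Local Notation C := (CC R).
Implicit Types (f g : C -> C) (z : C).

Lemma dD f g z : differentiable f z -> differentiable g z ->
  differentiable (fun w => f w + g w) z.
Proof. exact: differentiableD. Qed.
Lemma dM f g z : differentiable f z -> differentiable g z ->
  differentiable (fun w => f w * g w) z.
Proof. exact: differentiableM. Qed.
Lemma dN f z : differentiable f z -> differentiable (fun w => - f w) z.
Proof. exact: differentiableN. Qed.
Lemma dV f z : differentiable f z -> f z != 0 -> differentiable (fun w => (f w)^-1) z.
Proof. exact: differentiableV. Qed.
Lemma dC (c : C) z : differentiable (fun _ : C => c) z.
Proof. exact: differentiable_cst. Qed.
Lemma dI z : differentiable (fun w : C => w) z.
Proof. exact/derivable1_diffP/derivable_id. Qed.
Lemma dX f n z : differentiable f z -> differentiable (fun w => f w ^+ n) z.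
Proof.
move=> h; elim: n => [|n IH]; first exact: dC.
have -> : (fun w => f w ^+ n.+1) = (fun w => f w * f w ^+ n).
  by apply: funext => w; rewrite exprS.
exact: dM.
Qed.
Lemma dfcomp f g z : differentiable f z -> differentiable g (f z) ->
  differentiable (fun w => g (f w)) z.
Proof. exact: differentiable_comp. Qed.
End S.

End A.
Import A.

Module B.
Section S.
Variable R : realType.
Local Notation C := (CC R).
Local Notation Re := (@complex.Re R).

Lemma Re_sqrtc_ge0 (x : C) : 0 <= Re (@sqrtc R x).
Proof. by case: x => a b /=; rewrite sqrtr_ge0. Qed.

Lemma Re_sqrtc_gt0 (x : C) : 0 < Re x -> 0 < Re (@sqrtc R x).
Proof.
case: x => a b /= ha; rewrite [X in _ < X]/= sqrtr_gt0 divr_gt0 //.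
by rewrite ltr_pwDr // sqrtr_ge0.
Qed.

Lemma ReD (x y : C) : Re (x + y) = Re x + Re y.
Proof. by case: x => a b; case: y. Qed.

Lemma norm_ge_Re (x : C) : 0 <= Re x -> ((Re x)%:C)%C <= `|x|.
Proof.
move=> h; apply: le_trans (normc_ge_Re x).
by rewrite lecR ger0_norm.
Qed.

Definition sq (x : C) : C := @sqrtc R x.

Lemma sq_key (x y : C) : (sq x - sq y) * (sq x + sq y) = x - y.
Proof. by rewrite -subr_sqr /sq !sqr_sqrtc. Qed.

Lemma sq_nrm (x y : C) : 0 < Re y -> ((Re (sq y))%:C)%C <= `|sq x + sq y|.
Proof.
move=> hy; have hb := Re_sqrtc_gt0 _ hy.
have ha := Re_sqrtc_ge0 x.
have h2 : 0 <= Re (sq x + sq y) by rewrite ReD addr_ge0 // ltW.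
apply: (le_trans _ (norm_ge_Re _ h2)).
by rewrite lecR ReD lerDr.
Qed.

Lemma sq_cvg {T : Type} (F : set_system T) {FF : Filter F} (u : T -> C) (w : C) :
  0 < Re w -> u x @[x --> F] --> w -> sq (u x) @[x --> F] --> sq w.
Proof.
move=> hw hu; have hb := Re_sqrtc_gt0 _ hw.
have rb0 : 0 < ((Re (sq w))%:C)%C :> C by rewrite ltcR.
apply/cvgrPdist_lt => e e0.
have eb : 0 < e * ((Re (sq w))%:C)%C by rewrite mulr_gt0.
have /(_ FF) := (cvgrPdist_lt _ _).1 hu _ eb; apply: filterS => y hy.
rewrite -(ltr_pM2r rb0); apply: le_lt_trans hy.
rewrite -(sq_key w (u y)) normrM ler_wpM2l //.
by rewrite addrC; apply: sq_nrm.
Qed.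

Lemma sq_diff (w : C) : 0 < Re w -> differentiable sq w.
Proof.
move=> hw; have hb := Re_sqrtc_gt0 _ hw.
have hbb : sq w + sq w != 0.
  apply/negP => /eqP h0; have := addr_gt0 hb hb.
  by rewrite -ReD -/(sq w) h0 /= ltxx.
apply/derivable1_diffP; apply/cvg_ex; exists ((sq w + sq w)^-1).
have Hlim : (fun h : C => (sq (h + w) + sq w)^-1) @ 0^' --> (sq w + sq w)^-1.
  apply: cvgV => //; apply: cvgD; last exact: cvg_cst.
  have hp : (fun h : C => h + w) @ 0^' --> w.
    have : (fun h : C => h + w) @ 0 --> 0 + w.
      exact: (@cvgD _ _ _ _ (nbhs_filter (0:C)) id (fun=> w) 0 w cvg_id (cvg_cst w)).
    rewrite add0r => H; apply: (cvg_trans _ H).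
    apply: cvg_app; exact: nbhs_dnbhs.
  exact: (sq_cvg _ _ _ hw hp).
apply: cvg_trans Hlim; apply: near_eq_cvg; near=> h.
have hn : h != 0 by near: h; exact: nbhs_dnbhs_neq.
rewrite /= /shift /= [_%:A]mulr1; rewrite -[_ *: _]/(_ * _).
have k := sq_key (h + w) w; rewrite addrK in k.
have hs : sq (h + w) + sq w != 0.
  apply/negP => /eqP h0; move: k; rewrite h0 mulr0 => /esym /eqP; exact/negP.
have hd : sq (h + w) - sq w != 0.
  apply/negP => /eqP h0; move: k; rewrite h0 mul0r => /esym /eqP; exact/negP.
move: k hs hd; set a := sq (h + w); set b := sq w => k hs hd; rewrite -k; field.
by rewrite hs hd.
Unshelve. all: by end_near.
Qed.
End S.

End B.
Import B.

Module M.
Section S.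
Variable R : realType.
Local Notation C := (CC R).
Variables (a b : R) (N : nat).

Definition P (e : R) (z : C) : 'M[C]_2 := phi1 e z *m phi1 e z *m phi3 z *m phi3 z.
Definition M (z : C) : 'M[C]_2 := P a z ^+ N./2 *m P b z ^+ N./2.
Definition tau (z : C) : C := \tr (M z).
Definition dd (z : C) : C := ((1 - z^-1) ^+ 2) ^+ N./2 * ((1 - z^-1) ^+ 2) ^+ N./2.
Definition W (z : C) : C := 1 - 4 * dd z ^+ 2 / tau z ^+ 2.
Definition Q (z : C) : C := sq R (W z).
Definition g2 (z : C) : 'M[C]_2 :=
  (- (tau z * Q z))^-1 *: (M z - ((tau z + tau z * Q z) / 2)%:M).
Definition g1 (z : C) : 'M[C]_2 :=
  (tau z * Q z)^-1 *: (M z - ((tau z - tau z * Q z) / 2)%:M).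

Lemma Phi_eq e z : Phi e z = ((1 - z^-1)^-1) ^+ 2 *: P e z.
Proof.
rewrite /Phi /phi2 /phi4 /P -!scalemxAr -!scalemxAl scalerA expr2.
by [].
Qed.

Lemma phiN_eq z : phiN a b N z = ((dd z)^-1) *: M z.
Proof.
rewrite /phiN !Phi_eq [X in X *m _]exprZn [X in _ *m X]exprZn.
rewrite -scalemxAl -scalemxAr scalerA /dd /M.
by rewrite invfM -!exprVn.
Qed.

Lemma dd_neq0 z : z != 1 -> dd z != 0.
Proof.
move=> z1; have h : 1 - z^-1 != 0.
  rewrite subr_eq0; apply: contra z1 => /eqP h; apply/eqP.
  by rewrite -[z]invrK -h invr1.
by rewrite /dd mulf_neq0 // !expf_neq0.
Qed.

Lemma tN_eq z : tN a b N z = (dd z)^-1 * tau z.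
Proof. by rewrite /tN phiN_eq mxtraceZ. Qed.

Lemma sqrt_eq z : z != 1 -> tau z != 0 ->
  sqrt_t2m4 (tN a b N z) = (dd z)^-1 * tau z * Q z.
Proof.
move=> z1 t0; rewrite /sqrt_t2m4 tN_eq /Q /W /sq; congr (_ * sqrtc _).
have := dd_neq0 z z1; move: (dd z) (tau z) t0 => d t t0 d0.
by field; rewrite t0 d0.
Qed.

Lemma F2N_eq z : z != 1 -> tau z != 0 -> Q z != 0 ->
  F2N a b N z = g2 z.
Proof.
move=> z1 t0 q0; rewrite /F2N /g2 /r1N /r2N sqrt_eq // tN_eq phiN_eq.
have d0 := dd_neq0 z z1.
move: (dd z) (tau z) (Q z) (M z) t0 q0 d0 => d t q Mz t0 q0 d0.
apply/matrixP => i j; rewrite !mxE.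
have h2 : (2 : C) != 0 by rewrite pnatr_eq0.
have hA : t - t * q - (t + t * q) != 0.
  have -> : t - t * q - (t + t * q) = -(2 * t * q) by ring.
  by rewrite oppr_eq0 !mulf_neq0.
have hB : t + t * q - (t - t * q) != 0.
  have -> : t + t * q - (t - t * q) = 2 * t * q by ring.
  by rewrite !mulf_neq0.
by case: (i == j); rewrite ?mulr1n ?mulr0n; field; rewrite ?q0 ?t0 ?d0 ?hA ?hB.
Qed.

Lemma F1N_eq z : z != 1 -> tau z != 0 -> Q z != 0 ->
  F1N a b N z = g1 z.
Proof.
move=> z1 t0 q0; rewrite /F1N /g1 /r1N /r2N sqrt_eq // tN_eq phiN_eq.
have d0 := dd_neq0 z z1.
move: (dd z) (tau z) (Q z) (M z) t0 q0 d0 => d t q Mz t0 q0 d0.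
apply/matrixP => i j; rewrite !mxE.
have h2 : (2 : C) != 0 by rewrite pnatr_eq0.
have hA : t - t * q - (t + t * q) != 0.
  have -> : t - t * q - (t + t * q) = -(2 * t * q) by ring.
  by rewrite oppr_eq0 !mulf_neq0.
have hB : t + t * q - (t - t * q) != 0.
  have -> : t + t * q - (t - t * q) = 2 * t * q by ring.
  by rewrite !mulf_neq0.
by case: (i == j); rewrite ?mulr1n ?mulr0n; field; rewrite ?q0 ?t0 ?d0 ?hA ?hB.
Qed.
End S.

End M.
Import M.

Module M2.
Section S.
Variable R : realType.
Local Notation C := (CC R).

Definition mxd (A : C -> 'M[C]_2) (z : C) :=
  forall i j : 'I_2, differentiable (fun w => A w i j) z.

Lemma mxd_mul A B z : mxd A z -> mxd B z -> mxd (fun w => A w *m B w) z.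
Proof.
move=> hA hB i j.
under eq_fun do rewrite mxE big_ord_recl big_ord1.
by apply: dD; apply: dM.
Qed.

Lemma mxd_pow A z n : mxd A z -> mxd (fun w => A w ^+ n) z.
Proof.
move=> hA; elim: n => [|n IH] i j.
  have -> : (fun w => (A w ^+ 0) i j) = (fun w => (1 : 'M[C]_2) i j).
    by apply: funext => w; rewrite expr0.
  exact: dC.
have -> : (fun w => (A w ^+ n.+1) i j) = (fun w => (A w *m A w ^+ n) i j).
  by apply: funext => w; rewrite exprS mulmxE.
exact: mxd_mul.
Qed.

Lemma mxd_mx2 (f1 f2 f3 f4 : C -> C) z :
  differentiable f1 z -> differentiable f2 z -> differentiable f3 z ->
  differentiable f4 z -> mxd (fun w => mx2 (f1 w) (f2 w) (f3 w) (f4 w)) z.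
Proof.
move=> h1 h2 h3 h4 i j.
have -> : (fun w => mx2 (f1 w) (f2 w) (f3 w) (f4 w) i j) =
  (fun w => if (i : nat) == 0%N then (if (j : nat) == 0%N then f1 w else f2 w)
            else (if (j : nat) == 0%N then f3 w else f4 w)).
  by apply: funext => w; rewrite mxE.
by case: (_ == _); case: (_ == _).
Qed.

Lemma dinv z : z != 0 -> differentiable (fun w : C => w^-1) z.
Proof. by move=> z0; apply: dV => //; exact: dI. Qed.

Lemma mxd_phi1 e z : z != 0 -> mxd (phi1 e) z.
Proof.
move=> z0; apply: mxd_mx2; try exact: dC.
by apply: dM; [exact: dC | exact: dinv].
Qed.

Lemma mxd_phi3 z : z != 0 -> mxd (@phi3 R) z.
Proof. by move=> z0; apply: mxd_mx2; try exact: dC; exact: dinv. Qed.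

Lemma mxd_P e z : z != 0 -> mxd (P R e) z.
Proof.
move=> z0.
apply: (mxd_mul (fun w => phi1 e w *m phi1 e w *m phi3 w) (@phi3 R)); last exact: mxd_phi3.
apply: (mxd_mul (fun w => phi1 e w *m phi1 e w) (@phi3 R)); last exact: mxd_phi3.
by apply: mxd_mul; exact: mxd_phi1.
Qed.

Variables (a b : R) (N : nat).
Local Notation M := (M R a b N).
Local Notation tau := (tau R a b N).
Local Notation dd := (dd R N).
Local Notation W := (W R a b N).
Local Notation Q := (Q R a b N).

Lemma mxd_M z : z != 0 -> mxd M z.
Proof.
move=> z0; apply: (mxd_mul (fun w => P R a w ^+ N./2) (fun w => P R b w ^+ N./2));
by apply: mxd_pow; apply: mxd_P.
Qed.

Lemma dtau z : z != 0 -> differentiable tau z.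
Proof.
move=> z0; have hM := mxd_M z z0.
have -> : tau = (fun w => M w ord0 ord0 + M w (lift ord0 ord0) (lift ord0 ord0)).
  by apply: funext => w; rewrite /tau /mxtrace big_ord_recl big_ord1.
exact: dD.
Qed.

Lemma ddd z : z != 0 -> differentiable dd z.
Proof.
move=> z0; have h : differentiable (fun w : C => (1 - w^-1) ^+ 2 ^+ N./2) z.
  by do 2 apply: dX; apply: dD; [exact: dC | apply: dN; exact: dinv].
exact: dM.
Qed.

Lemma dW z : z != 0 -> tau z != 0 -> differentiable W z.
Proof.
move=> z0 t0; apply: dD; first exact: dC.
apply: dN; apply: dM; first by apply: dM; [exact: dC | apply: dX; exact: ddd].
by apply: dV; [apply: dX; exact: dtau | rewrite expf_neq0].
Qed.

Lemma dQ z : z != 0 -> tau z != 0 -> 0 < complex.Re (W z) -> differentiable Q z.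
Proof.
move=> z0 t0 hW; have -> : Q = (fun w => sq R (W w)) by [].
exact: (dfcomp R W (sq R) z (dW z z0 t0) (sq_diff R _ hW)).
Qed.

Lemma Q_neq0 z : 0 < complex.Re (W z) -> Q z != 0.
Proof.
move=> hW; apply/negP => /eqP h; have := Re_sqrtc_gt0 _ _ hW.
by rewrite (_ : sqrtc _ = 0) ?ltxx //; exact: h.
Qed.

Lemma dMn (f : C -> C) k z : differentiable f z -> differentiable (fun w => f w *+ k) z.
Proof.
move=> h; have -> : (fun w => f w *+ k) = (fun w => f w * k%:R).
  by apply: funext => w; rewrite mulr_natr.
by apply: dM => //; exact: dC.
Qed.

Lemma g2_entry w i j : g2 R a b N w i j =
  (- (tau w * Q w))^-1 * (M w i j - ((tau w + tau w * Q w) / 2) *+ (i == j)).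
Proof. by rewrite /g2; move: (M w) => Mw; rewrite !mxE. Qed.

Lemma g1_entry w i j : g1 R a b N w i j =
  (tau w * Q w)^-1 * (M w i j - ((tau w - tau w * Q w) / 2) *+ (i == j)).
Proof. by rewrite /g1; move: (M w) => Mw; rewrite !mxE. Qed.

Lemma mxd_g2 z : z != 0 -> tau z != 0 -> 0 < complex.Re (W z) -> mxd (g2 R a b N) z.
Proof.
move=> z0 t0 hW i j.
have hQ := dQ z z0 t0 hW; have ht := dtau z z0; have hM := mxd_M z z0.
under eq_fun do rewrite g2_entry.
apply: dM.
  apply: dV; first by apply: dN; exact: dM.
  by rewrite oppr_eq0 mulf_neq0 // (Q_neq0 z hW).
apply: dD; first exact: hM.
apply: dN; apply: dMn; apply: dM; last exact: dC.
by apply: dD => //; exact: dM.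
Qed.

Lemma mxd_g1 z : z != 0 -> tau z != 0 -> 0 < complex.Re (W z) -> mxd (g1 R a b N) z.
Proof.
move=> z0 t0 hW i j.
have hQ := dQ z z0 t0 hW; have ht := dtau z z0; have hM := mxd_M z z0.
under eq_fun do rewrite g1_entry.
apply: dM.
  apply: dV; first exact: dM.
  by rewrite mulf_neq0 // (Q_neq0 z hW).
apply: dD; first exact: hM.
apply: dN; apply: dMn; apply: dM; last exact: dC.
by apply: dD => //; apply: dN; exact: dM.
Qed.
End S.

End M2.
Import M2.

Module M3.
Section S.
Variable R : realType.
Local Notation C := (CC R).

Definition pos (A : 'M[C]_2) := forall i j, 0 < A i j.

Lemma pos_mul A B : pos A -> pos B -> pos (A *m B).
Proof.
move=> hA hB i j; rewrite mxE big_ord_recl big_ord1.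
by rewrite addr_gt0 // mulr_gt0.
Qed.

Lemma pos_pow A n : pos A -> pos (A ^+ n.+1).
Proof.
move=> hA; elim: n => [|n IH]; first by rewrite expr1.
by rewrite exprS -mulmxE; apply: pos_mul.
Qed.

Lemma pos_mx2 (x y u v : C) : 0 < x -> 0 < y -> 0 < u -> 0 < v -> pos (mx2 x y u v).
Proof.
move=> hx hy hu hv i j; rewrite mxE.
by case: (_ == _); case: (_ == _).
Qed.

Lemma pos_P e : 0 < e -> pos (P R e 1).
Proof.
move=> e0; have ec : 0 < real_complex R e by rewrite ltcR.
have h1 : pos (phi1 e 1).
  apply: pos_mx2; rewrite ?ltr01 //.
    by rewrite invr1 mulr1 exprn_gt0.
  by rewrite invr_gt0 exprn_gt0.
have h3 : pos (@phi3 R 1) by apply: pos_mx2; rewrite ?invr1 ?ltr01.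
by rewrite /P; do 3 apply: pos_mul => //.
Qed.

Lemma Re_pos (x : C) : `|1 - x| < 1 -> 0 < complex.Re x.
Proof.
move=> h; have := normc_ge_Re (1 - x).
move=> /le_lt_trans /(_ h); rewrite ltcR.
case: x {h} => p q /= hh.
have := le_lt_trans (ler_norm _) hh.
by rewrite ltrBlDr ltrDl.
Qed.

Variables (a b : R) (N : nat).
Local Notation M := (M R a b N).
Local Notation tau := (tau R a b N).
Local Notation dd := (dd R N).
Local Notation W := (W R a b N).
Local Notation Q := (Q R a b N).

Lemma tau1_gt0 : 0 < a -> 0 < b -> (0 < N./2)%N -> 0 < tau 1.
Proof.
move=> a0 b0 hm.
have hM : pos (M 1).
  rewrite /M.M; case: (N./2) hm => // k _.
  by apply: pos_mul; apply: pos_pow; apply: pos_P.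
by rewrite /tau /mxtrace big_ord_recl big_ord1 addr_gt0.
Qed.

Lemma W1 : (0 < N./2)%N -> W 1 = 1.
Proof.
move=> hm; rewrite /W /dd invr1 subrr expr0n /=.
case: (N./2) hm => // k _; rewrite expr0n /= mul0r expr0n /= mulr0 mul0r.
by rewrite subr0.
Qed.
End S.

End M3.
Import M3.

Theorem lemma3p5 (R : realType) (alpha beta : R)
  (ha : 0 < alpha < 1) (hb : 0 < beta < 1) (N : nat)
  (hN2 : (2 <= N)%N) (hNeven : ~~ odd N) :
  extends_analytically_at (F2N alpha beta N) 1 /\
  extends_analytically_at (F1N alpha beta N) 1.
Proof.
have hm : (0 < N./2)%N.
  case hk : (N./2) => [|k] //; move: (odd_double_half N).
  by rewrite (negbTE hNeven) hk /= => HN; rewrite -HN in hN2.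
case/andP: ha => a0 _; case/andP: hb => b0 _.
set tau := M.tau R alpha beta N.
set W := M.W R alpha beta N.
have t1 : 0 < tau 1 := tau1_gt0 R alpha beta N a0 b0 hm.
have t1n : tau 1 != 0 by rewrite gt_eqF.
have one0 : (1 : CC R) != 0 := oner_neq0 _.
have Hc : \forall z \near (1 : CC R),
    [/\ z != 0, tau z != 0 & 0 < complex.Re (W z)].
  have H0 : \forall z \near (1 : CC R), `|1 - z| < 1.
    exact: ((cvgrPdist_lt (F := nbhs (1 : CC R)) id 1).1 cvg_id _ ltr01).
  have Ht : \forall z \near (1 : CC R), `|tau 1 - tau z| < `|tau 1|.
    have := differentiable_continuous (dtau R alpha beta N 1 one0).
    move=> /(@cvgrPdist_lt _ _ _ (nbhs (1 : CC R)) (nbhs_filter (1 : CC R))).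
    by apply; rewrite normr_gt0.
  have HW : \forall z \near (1 : CC R), `|1 - W z| < 1.
    have := differentiable_continuous (dW R alpha beta N 1 one0 t1n).
    move=> /(@cvgrPdist_lt _ _ _ (nbhs (1 : CC R)) (nbhs_filter (1 : CC R))).
    by rewrite (W1 R alpha beta N hm); apply; exact: ltr01.
  near=> z; split.
  - have : `|1 - z| < 1 by near: z; exact: H0.
    by apply: contraTneq => ->; rewrite subr0 normr1 ltxx.
  - have : `|tau 1 - tau z| < `|tau 1| by near: z; exact: Ht.
    by apply: contraTneq => ->; rewrite subr0 ltxx.
  - by apply: Re_pos; near: z; exact: HW.
split.
- exists (g2 R alpha beta N); split.
  + near=> z.
    have z1 : z != 1 by near: z; exact: nbhs_dnbhs_neq.
    have [z0 tz hW] : [/\ z != 0, tau z != 0 & 0 < complex.Re (W z)].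
      by near: z; exact: (nbhs_dnbhs Hc).
    by apply: F2N_eq => //; exact: Q_neq0.
  + near=> z => i j.
    have [z0 tz hW] : [/\ z != 0, tau z != 0 & 0 < complex.Re (W z)].
      by near: z; exact: Hc.
    by apply/derivable1_diffP; exact: mxd_g2.
- exists (g1 R alpha beta N); split.
  + near=> z.
    have z1 : z != 1 by near: z; exact: nbhs_dnbhs_neq.
    have [z0 tz hW] : [/\ z != 0, tau z != 0 & 0 < complex.Re (W z)].
      by near: z; exact: (nbhs_dnbhs Hc).
    by apply: F1N_eq => //; exact: Q_neq0.
  + near=> z => i j.
    have [z0 tz hW] : [/\ z != 0, tau z != 0 & 0 < complex.Re (W z)].
      by near: z; exact: Hc.
    by apply/derivable1_diffP; exact: mxd_g1.
Unshelve. all: by end_near.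
Qed.
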